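(* Let $X=\{x_j:j\in J\}\subset\mathbb{R}^2$ be finite with $n=|J|$. If there exist weights $\tau_j\geq\frac{1}{n+1}$ ($j\in J$) with $\sum_j\tau_j=1$ and $s=\sum_j\tau_jx_j$, then $s\in\mathrm{conv}(\mathcal{M})$.
   Context: $\mathcal{M}=\{M_j:j\in J\}$ with $M_j=\frac{1}{n+1}\big(x_j+\sum_{i\in J}x_i\big)$. *)

(* Defs.v *)
From HB Require Import structures.
From mathcomp Require Import all_boot all_order all_algebra.
From mathcomp Require Import reals.
Set Implicit Arguments. Unset Strict Implicit. Unset Printing Implicit Defensive.
Import Order.TTheory GRing.Theory Num.Theory.
Local Open Scope ring_scope.

Definition Mpt (R : realType) (J : finType) (x : J -> 'rV[R]_2) (j : J)
  : 'rV[R]_2 :=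
  (#|J|.+1%:R)^-1 *: (x j + \sum_(i : J) x i).

Definition in_conv_hull (R : realType) (J : finType) (p : J -> 'rV[R]_2)
  (s : 'rV[R]_2) : Prop :=
  exists lam : J -> R,
    (forall j, 0 <= lam j) /\ \sum_(j : J) lam j = 1 /\
    s = \sum_(j : J) lam j *: p j.

(* Main.v *)
Require Import Defs.
From HB Require Import structures.
From mathcomp Require Import all_boot all_order all_algebra.
From mathcomp Require Import reals.
Import Order.TTheory GRing.Theory Num.Theory.
Local Open Scope ring_scope.

Theorem lemma7 (R : realType) (J : finType) (x : J -> 'rV[R]_2)
  (x_inj : injective x) (tau : J -> R)
  (tau_ge : forall j, (#|J|.+1%:R)^-1 <= tau j)
  (tau_sum : \sum_(j : J) tau j = 1)
  (s : 'rV[R]_2) (s_def : s = \sum_(j : J) tau j *: x j) :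
  in_conv_hull (Mpt x) s.
Proof.
set N : R := #|J|.+1%:R.
have N0 : N != 0 by rewrite /N pnatr_eq0.
have Npos : 0 < N by rewrite /N ltr0n.
have sumlam : \sum_(j : J) (N * tau j - 1) = 1.
  rewrite sumrB -big_distrr /= tau_sum mulr1 sumr_const /N -natr1 -addrA addrC; apply: subrK.
exists (fun j => N * tau j - 1); split; [|split] => //.
- move=> j; rewrite subr_ge0 -(mulfV N0) ler_pM2l //.
rewrite s_def /Mpt -/N; symmetry.
under eq_bigr => j _ do rewrite scalerA scalerDr.
rewrite big_split /= -scaler_suml -mulr_suml sumlam mul1r.
under eq_bigr => j _ do rewrite mulrBl mulrAC mulfV // mul1r scalerBl.
rewrite sumrB -scaler_sumr /= addrNK; by under eq_bigr => i _ do rewrite mul1r.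
Qed.
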